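(* For every $T>0$, $$\sup_{t\in[0,T]}\Bigl|\int_0^t Y^N(s)\,\widetilde Z^N(s)\,ds\Bigr|\to0$$ in probability as $N\to\infty$.
   Context: Model. Fix $\tau>0$, $\mu\ge 0$, $N\in\mathbb N$, and write $L=\lfloor \tau N\rfloor$. The state space is $\Omega_N=[0,\infty)^{L+1}$, with elements $x=(x_{-L},\dots,x_0)$. Define $\theta_N^\pm:\Omega_N\to\Omega_N$ by $(\theta_N^\pm x)_j=x_{j+1}$ for $-L\le j<0$, $(\theta_N^+x)_0=x_0(1+\frac1N)$, $(\theta_N^-x)_0=\max\{x_0(1-\frac{x_{-L}}{N^2}),0\}$. Let $\xi^N=(\xi^N(n))_{n\ge0}$ be the discrete-time Markov chain on $\Omega_N$ moving from $x$ to $\theta_N^+x$ or $\theta_N^-x$ with probability $1/2$ each, with $\xi^N_j(0)=\mu N$ for all $j$. Let $(\sigma_n)_{n\ge1}$ be i.i.d. Exp(1), independent of $\xi^N$, $J_0=0$, $J_n=\sigma_1+\dots+\sigma_n$, and $X^N(t)=\xi^N(n)$ for $t\in[J_n,J_{n+1})$. For $t\ge0$: $Y^N(t)=X^N_0(Nt)/N$, $Z^N(t)=X^N_{-L}(Nt)/N$, $\widetilde Z^N(t)=Z^N(t)-\min\{Z^N(t),N\}$. *)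

(* Defs.v *)
From HB Require Import structures.
From mathcomp Require Import all_boot all_order all_algebra.
From mathcomp Require Import all_classical all_reals all_analysis.
Set Implicit Arguments. Unset Strict Implicit. Unset Printing Implicit Defensive.
Import Order.TTheory GRing.Theory Num.Theory.
Import numFieldNormedType.Exports.
Local Open Scope classical_set_scope.
Local Open Scope ring_scope.

(* A state x = (x_{-L},...,x_0) is encoded as x : nat -> R with x k = x_{-k};
   only the coordinates k <= L matter (coordinates k <= L never depend on
   coordinates k > L). *)
Section Model.
Context {R : realType}.

Definition Lof (tau : R) (N : nat) : nat := Num.truncn (tau * N%:R).

Definition theta_plus (N : nat) (x : nat -> R) : nat -> R :=
  fun k => if k is k'.+1 then x k' else x 0%N * (1 + N%:R^-1).

Definition theta_minus (L N : nat) (x : nat -> R) : nat -> R :=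
  fun k => if k is k'.+1 then x k'
           else Num.max (x 0%N * (1 - x L / (N%:R ^+ 2))) 0.

Fixpoint chain (L N : nat) (mu : R) (c : nat -> R) (n : nat) : nat -> R :=
  match n with
  | 0%N => fun _ => mu * N%:R
  | n'.+1 => let x := chain L N mu c n' in
             if c n' == 1 then theta_plus N x else theta_minus L N x
  end.

(* J_n = sigma_1 + ... + sigma_n  (sigma is indexed from 0 here) *)
Definition jump_time (s : nat -> R) (n : nat) : R := \sum_(i < n) s i.

(* X^N(t) = xi^N(n) for t in [J_n, J_{n+1}); on the null event where no such
   n exists, an arbitrary index (0) is used. *)
Definition Xproc (L N : nat) (mu : R) (c s : nat -> R) (t : R) : nat -> R :=
  chain L N mu c (xget 0%N [set n | jump_time s n <= t < jump_time s n.+1]).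

Definition Yproc L N mu c s (t : R) : R := Xproc L N mu c s (N%:R * t) 0%N / N%:R.
Definition Zproc L N mu c s (t : R) : R := Xproc L N mu c s (N%:R * t) L / N%:R.
Definition Ztil L N mu c s (t : R) : R :=
  Zproc L N mu c s t - Num.min (Zproc L N mu c s t) N%:R.

Definition integral_YZ L N mu c s (t : R) : R :=
  Rintegral lebesgue_measure `[0, t] (fun u => Yproc L N mu c s u * Ztil L N mu c s u).

End Model.

Section Prob.
Context {d : measure_display} {T : measurableType d} {R : realType}.

Definition mutual_indep (P : probability T R) (I : eqType) (X : I -> T -> R) : Prop :=
  (forall i, measurable_fun setT (X i)) /\
  forall (s : seq I) (B : I -> set R), uniq s -> (forall i, measurable (B i)) ->
    P (\bigcap_(i in [set` s]) (X i @^-1` B i)) =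
    (\big[*%E/1%E]_(i <- s) P (X i @^-1` B i))%E.

Definition fair_coin (P : probability T R) (X : T -> R) : Prop :=
  P (X @^-1` [set 1]) = (1/2)%:E /\ P (X @^-1` [set 0]) = (1/2)%:E.

Definition exp1_distributed (P : probability T R) (X : T -> R) : Prop :=
  forall x : R, P (X @^-1` `]-oo, x]) = (if 0 <= x then 1 - expR (- x) else 0)%:E.

(* For measurable events this is the
   usual P(V_N > eps) -> 0. *)
Definition cvg_in_prob0 (P : probability T R) (V : nat -> T -> \bar R) : Prop :=
  forall eps delta : R, 0 < eps -> 0 < delta ->
    \forall N \near \oo, exists B : set T,
      [/\ measurable B, [set w | (eps%:E < V N w)%E] `<=` B & (P B < delta%:E)%E].

End Prob.

(* Main.v *)
Require Import Defs.
From HB Require Import structures.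
From mathcomp Require Import all_boot all_order all_algebra.
From mathcomp Require Import all_classical all_reals all_analysis.
Import Order.TTheory GRing.Theory Num.Theory.
Local Open Scope classical_set_scope.
From mathcomp Require Import ring lra.
Local Open Scope ring_scope.
Lemma chain_bound (R : realType) (L N : nat) (mu : R) (c : nat -> R) (n : nat) :
  0 <= mu -> forall k, 0 <= chain L N mu c n k <= mu * N%:R * (1 + N%:R^-1) ^+ n.
Proof.
move=> mu0; have hq : 1 <= 1 + N%:R^-1 :> R by rewrite lerDl invr_ge0 ler0n.
have hb : forall m, 0 <= mu * N%:R * (1 + N%:R^-1) ^+ m.
  move=> m; rewrite !mulr_ge0 // ?exprn_ge0 //; exact: le_trans hq.
have hmono : forall m, mu * N%:R * (1 + N%:R^-1) ^+ m <= mu * N%:R * (1 + N%:R^-1) ^+ m.+1.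
  by move=> m; rewrite exprSr mulrA; apply: ler_peMr.
elim: n => [|n IH] k /=.
  by rewrite expr0 mulr1 lexx mulr_ge0.
have [x0 xle] := andP (IH 0%N).
case: (c n == 1).
  case: k => [|k] /=.
    rewrite mulr_ge0 ?(le_trans _ hq) //= exprSr mulrA.
    by apply: ler_wpM2r => //; exact: le_trans hq.
  by have /andP[-> /le_trans] := IH k; apply.
case: k => [|k] /=.
  rewrite le_max lexx orbT /= ge_max hb andbT.
  apply: le_trans (hmono n); apply: le_trans xle.
  rewrite -[X in _ <= X]mulr1; apply: ler_wpM2l => //.
  rewrite lerBlDr lerDl; apply: mulr_ge0; first by have /andP[] := IH L.
  by rewrite invr_ge0 exprn_ge0.
by have /andP[-> /le_trans] := IH k; apply.
Qed.

Lemma pow_bound (R : realType) (N k n : nat) : (0 < N)%N -> (n <= N * k)%N ->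
  (1 + N%:R^-1) ^+ n <= expR k%:R :> R.
Proof.
move=> N0 nle.
have hq : 1 <= 1 + N%:R^-1 :> R by rewrite lerDl invr_ge0 ler0n.
apply: (@le_trans _ _ ((1 + N%:R^-1) ^+ (N * k))).
  exact: ler_weXn2l.
apply: (@le_trans _ _ (expR (N%:R^-1) ^+ (N * k))).
  apply: lerXn2r; rewrite ?nnegrE ?expR_ge0 ?(le_trans _ hq) //.
  exact: expR_ge1Dx.
rewrite -expRM_natl natrM mulrAC mulfV ?mul1r //.
by rewrite pnatr_eq0 -lt0n.
Qed.

Lemma markov_count (d : measure_display) (T : measurableType d) (R : realType)
  (P : probability T R) (A : nat -> set T) (m : nat) :
  (forall i, measurable (A i)) ->
  let B := [set w | m%:R / 2 <= \sum_(i < m) \1_(A i) w :> R] in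
  measurable B /\ ((m%:R / 2)%:E * P B <= \sum_(i < m) P (A i))%E.
Proof.
move=> mA B.
have mf : measurable_fun setT (fun w => \sum_(i < m) \1_(A i) w : R).
  by apply: measurable_sum => i; exact: measurable_realfun.measurable_indic.
have mB : measurable B.
  have := mf measurableT `[m%:R / 2, +oo[%classic (measurable_itv _).
  rewrite setTI; congr measurable; apply/seteqP; split => w /=;
    by rewrite in_itv /= andbT.
split => //.
have h2 : 0 <= m%:R / 2 :> R by rewrite divr_ge0.
have -> : P B = (\int[P]_x (\1_B x)%:E)%E by rewrite integral_indic // setIT.
rewrite -ge0_integralZl_EFin //; last first.
  by apply/measurable_realfun.measurable_EFinP; exact: measurable_realfun.measurable_indic.
apply: (@le_trans _ _ (\int[P]_x (\sum_(i < m) (\1_(A i) x)%:E))%E).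
  apply: ge0_le_integral => //.
  - apply: emeasurable_funM; first exact: measurable_cst.
    by apply/measurable_realfun.measurable_EFinP; exact: measurable_realfun.measurable_indic.
  - apply: emeasurable_sum => i; apply/measurable_realfun.measurable_EFinP; exact: measurable_realfun.measurable_indic.
  move=> x _; rewrite sumEFin -EFinM lee_fin indicE.
  case: (boolP (x \in B)) => [/set_mem xB|_]; first by rewrite mulr1.
  rewrite mulr0; apply: sumr_ge0 => i _; rewrite indicE; by case: (_ \in _).
rewrite ge0_integral_sum //.
- rewrite le_eqVlt; apply/orP; left; apply/eqP; apply: eq_bigr => i _; rewrite integral_indic // setIT //.
by move=> i; apply/measurable_realfun.measurable_EFinP; exact: measurable_realfun.measurable_indic.
Qed.

Lemma count_small (R : realType) (s : nat -> R) (m : nat) (a : R) :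
  (0 < m)%N -> 0 < a -> (forall i, 0 <= s i) -> \sum_(i < m) s i <= a ->
  m%:R / 2 <= \sum_(i < m) ((s i <= 2 * a / m%:R)%R)%:R :> R.
Proof.
move=> m0 a0 s0 sle.
set b := 2 * a / m%:R.
have m0R : 0 < m%:R :> R by rewrite ltr0n.
have b0 : 0 < b by rewrite /b divr_gt0 // mulr_gt0.
set K := \sum_(i < m) ((s i <= b)%R)%:R.
have h1 : \sum_(i < m) b * (1 - ((s i <= b)%R)%:R) <= a.
  apply: le_trans sle; apply: ler_sum => i _.
  case: (boolP (s i <= b)) => h /=; first by rewrite subrr mulr0.
  by rewrite subr0 mulr1; apply: ltW; rewrite ltNge.
rewrite -mulr_sumr sumrB sumr_const card_ord -/K in h1.
have e : b * (m%:R - K) * m%:R = a * (2 * (m%:R - K)).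
  by rewrite /b; field; rewrite pnatr_eq0 -lt0n.
have h3 : a * (2 * (m%:R - K)) <= a * m%:R.
  by rewrite -e; apply: ler_wpM2r => //; exact: ltW.
rewrite ler_pM2l // in h3.
rewrite ler_pdivrMr ?ltr0Sn //; lra.
Qed.

Lemma jump_mono (R : realType) (s : nat -> R) (m n : nat) :
  (forall i, 0 <= s i) -> (m <= n)%N -> jump_time s m <= jump_time s n.
Proof.
move=> s0 mn; rewrite /jump_time -!(big_mkord xpredT) (big_cat_nat (leq0n m) mn) /=.
by rewrite lerDl; apply: sumr_ge0 => i _.
Qed.

Lemma det_zero (R : realType) (L N k : nat) (mu Tm : R) (c s : nat -> R) :
  (0 < N)%N -> 0 <= mu -> mu * expR k%:R < N%:R -> (forall i, 0 <= s i) ->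
  N%:R * Tm < jump_time s (N * k) ->
  forall t, 0 <= t <= Tm -> integral_YZ L N mu c s t = 0.
Proof.
move=> N0 mu0 muN s0 hJ t /andP[t0 tT].
rewrite /integral_YZ (eq_Rintegral _ (g := fun=> 0)); last first.
  move=> u /[!inE] /=; rewrite in_itv /= => /andP[u0 ut].
  suff -> : Ztil L N mu c s u = 0 by rewrite mulr0.
  rewrite /Ztil.
  suff hZ : Zproc L N mu c s u <= N%:R by rewrite min_l // subrr.
  rewrite /Zproc /Xproc.
  set n := xget _ _.
  have nle : (n <= N * k)%N.
    rewrite /n; case: xgetP => [x _ /= /andP[hx _]|_]; last exact: leq0n.
    rewrite leqNgt; apply/negP => /ltnW /(@jump_mono _ s _ _ s0) hm.
    have : N%:R * u <= N%:R * Tm.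
      by apply: ler_wpM2l => //; exact: le_trans ut tT.
    move=> h; have := lt_le_trans (le_lt_trans (le_trans hx h) hJ) hm.
    by rewrite ltxx.
  have NR : 0 < N%:R :> R by rewrite ltr0n.
  rewrite ler_pdivrMr //.
  have [_ hb] := andP (@chain_bound _ L N mu c n mu0 L).
  apply: (le_trans hb).
  rewrite -mulrA mulrC -mulrA ler_pM2l // mulrC.
  apply: le_trans (ltW muN); apply: ler_wpM2l => //.
  exact: pow_bound.
by rewrite /Rintegral integral0.
Qed.

Theorem proposition3p7 (R : realType) (d : measure_display) (T : measurableType d)
  (P : probability T R) (tau mu : R)
  (c : nat -> nat -> T -> R) (sig : nat -> nat -> T -> R) :
  0 < tau -> 0 <= mu ->
  (forall N : nat,
     mutual_indep P (fun i : nat + nat =>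
       match i with inl n => c N n | inr n => sig N n end) /\
     (forall n, fair_coin P (c N n)) /\
     (forall n, exp1_distributed P (sig N n))) ->
  forall Tm : R, 0 < Tm ->
    cvg_in_prob0 P (fun N w =>
      ereal_sup [set (`| integral_YZ (Lof tau N) N mu (fun n => c N n w)
                            (fun n => sig N n w) t |)%:E | t in `[0, Tm]]).
Proof.
move=> tau0 mu0 hyp Tm Tm0 eps delta eps0 delta0.
set k := (Num.truncn (4 * Tm / delta)).+1.
have hk : 4 * Tm / delta < k%:R by exact: truncnS_gt.
have k0 : (0 < k)%N by [].
have kR : 0 < k%:R :> R by rewrite ltr0n.
set M := (Num.truncn (mu * expR k%:R)).+1.
exists M => // N /= MN.
have muN : mu * expR k%:R < N%:R.
  apply: lt_le_trans (truncnS_gt _) _; by rewrite ler_nat.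
have N0 : (0 < N)%N.
  rewrite -(ltr_nat R); apply: le_lt_trans muN; apply: mulr_ge0 => //; exact: expR_ge0.
have NR : 0 < N%:R :> R by rewrite ltr0n.
have [hind [hcoin hexp]] := hyp N.
have msig : forall i, measurable_fun setT (sig N i) := fun i => hind.1 (inr i).
set m := (N * k)%N.
have m0 : (0 < m)%N by rewrite muln_gt0 N0.
have mR : 0 < m%:R :> R by rewrite ltr0n.
set b := 2 * Tm / k%:R.
have b0 : 0 < b by rewrite /b divr_gt0 // mulr_gt0.
set A := fun i => sig N i @^-1` `]-oo, b].
have mA : forall i, measurable (A i).
  by move=> i; rewrite -[A i]setTI; apply: msig => //; exact: measurable_itv.
have [mBc hBc] := @markov_count _ _ _ P A m mA.
set Bc := [set w | _ <= _] in mBc hBc.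
have hneg : P.-negligible (\bigcup_i (sig N i @^-1` `]-oo, 0])).
  apply: negligible_bigcup => i; apply/negligibleP.
    by rewrite -[_ @^-1` _]setTI; apply: msig => //; exact: measurable_itv.
  by have := hexp i 0; rewrite lexx oppr0 expR0 subrr; apply.
have [A0 [mA0 PA0 subA0]] := hneg.
exists (A0 `|` Bc); split.
- exact: measurableU.
- move=> w /= hw.
  case: (pselect (A0 w)) => [|nA0]; first by left.
  case: (pselect (Bc w)) => [|nBc]; first by right.
  exfalso.
  have spos : forall i, 0 <= sig N i w.
    move=> i; apply: ltW; rewrite ltNge; apply/negP => h; apply: nA0; apply: subA0.
    by exists i => //=; rewrite in_itv /= h.
  have hJ : N%:R * Tm < jump_time (fun n => sig N n w) m.
    rewrite ltNge; apply/negP => hle; apply: nBc.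
    have := @count_small _ (fun n => sig N n w) m (N%:R * Tm) m0 (mulr_gt0 NR Tm0) spos hle.
    have -> : 2 * (N%:R * Tm) / m%:R = b.
      rewrite /b /m natrM; field.
      by apply/andP; split; rewrite pnatr_eq0 -lt0n.
    move=> h; rewrite /Bc /=; apply: le_trans h _; rewrite le_eqVlt; apply/orP; left; apply/eqP; apply: eq_bigr => i _.
    rewrite indicE /A; congr (nat_of_bool _)%:R; apply/idP/idP => h.
      by apply/mem_set; rewrite /= in_itv /= h.
    by move/set_mem: h; rewrite /= in_itv.
  have hz := @det_zero _ (Lof tau N) N k mu Tm (fun n => c N n w) (fun n => sig N n w)
    N0 mu0 muN spos hJ.
  move: hw; rewrite ltNge => /negP; apply.
  apply: ge_ereal_sup => _ [t tin <-]; rewrite hz ?normr0 ?lee_fin ?(ltW eps0) //.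
- apply: le_lt_trans (@measureU2 _ _ _ P _ _ mA0 mBc) _.
  rewrite [X in (X + _)%E](_ : _ = 0%E) ?add0e; last exact: PA0.
  have hPA : forall i, (P (A i) <= b%:E)%E.
    move=> i; have := hexp i b; rewrite (ltW b0) /A => ->; rewrite lee_fin.
    have := expR_ge1Dx (- b); lra.
  have hsum : (\sum_(i < m) P (A i) <= (m%:R * b)%:E)%E.
    apply: (@le_trans _ _ (\sum_(i < m) b%:E)%E).
      by apply: lee_sum => i _; exact: hPA.
    by rewrite sumEFin sumr_const card_ord mulr_natl.
  have h2 : ((m%:R / 2)%:E * P Bc <= (m%:R / 2)%:E * (2 * b)%:E)%E.
    rewrite -EFinM; apply: le_trans hBc _; apply: le_trans hsum _.
    by rewrite lee_fin le_eqVlt; apply/orP; left; apply/eqP; field.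
  rewrite lee_pmul2l // in h2; last by rewrite lte_fin divr_gt0.
  apply: le_lt_trans h2 _; rewrite lte_fin.
  move: hk; rewrite ltr_pdivrMr // => hk.
  rewrite /b mulrA ltr_pdivrMr //; lra.
Qed.
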